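(* Let $n,k$ be positive integers and $i\in\{1,\ldots,n\}$ such that $k\cdot\frac{i}{n}\cdot \frac{n-i}{n}< 1$, $n\ge 8k$, and $i<n/2$. If $H\sim\text{Hyp}(n,i,k)$, then $\mathbb{P}(H \ge ik/n) \ge \frac{k}{n}$.
   Context: $\text{Hyp}(n,i,k)$ denotes the hypergeometric distribution: the number of black marbles in a sample without replacement of size $k$ from an urn with $i$ black and $n-i$ white marbles, i.e. $\mathbb{P}(H=j)=\binom{i}{j}\binom{n-i}{k-j}/\binom{n}{k}$. *)

(* Defs.v *)
From mathcomp Require Import all_boot all_order all_algebra.
Set Implicit Arguments. Unset Strict Implicit. Unset Printing Implicit Defensive.
Import Order.TTheory GRing.Theory Num.Theory.
Local Open Scope ring_scope.

(* P(H = j) for H ~ Hyp(n,i,k): binom(i,j) binom(n-i,k-j) / binom(n,k),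
   meaningful for 0 <= j <= k (the support of H lies in {0,..,k}). *)
Definition hyp_pmf {R : fieldType} (n i k j : nat) : R :=
  ('C(i, j) * 'C(n - i, k - j))%:R / ('C(n, k))%:R.

Definition hyp_tail_ge {R : realFieldType} (n i k : nat) (x : R) : R :=
  \sum_(j < k.+1 | x <= (j : nat)%:R) hyp_pmf n i k j.

(* Main.v *)
Require Import Defs.
From mathcomp Require Import all_boot all_order all_algebra.
From mathcomp Require Import zify ring.
Import Order.TTheory GRing.Theory Num.Theory.
Local Open Scope ring_scope.

Lemma split2 (F : nat -> nat) k :
  (\sum_(j < k.+3) F j = F 0%N + F 1%N + \sum_(j < k.+3 | (2 <= j)%N) F j)%N.
Proof.
rewrite (bigID (fun j : 'I_k.+3 => (j < 2)%N)) /=.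
rewrite big_mkcond !big_ord_recl /= big1 ?addn0 ?addnA; last by [].
by congr (_ + _); apply: eq_bigl => j; rewrite -leqNgt.
Qed.

Lemma split1 (F : nat -> nat) k :
  (\sum_(j < k.+2) F j = F 0%N + \sum_(j < k.+2 | (1 <= j)%N) F j)%N.
Proof.
rewrite (bigID (fun j : 'I_k.+2 => (j < 1)%N)) /=.
rewrite big_mkcond !big_ord_recl /= big1 ?addn0 ?addnA; last by [].
by congr (_ + _); apply: eq_bigl => j; rewrite -leqNgt.
Qed.

Lemma lowb (F : nat -> nat) k m (hm : (m < k.+1)%N) :
  (F m <= \sum_(j < k.+1 | (m <= j)%N) F j)%N.
Proof.
by rewrite (bigD1 (Ordinal hm)) //= leq_addr.
Qed.


Lemma Eq1 n i k' : ('C(i,0) * 'C(n - i, k'.+1 - 0) * (i * k'.+1) = 'C(i,1) * 'C(n - i, k'.+1 - 1) * (n - i - k'))%N.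
Proof.
rewrite bin0 bin1 subn0 subn1 /=.
have h := mul_bin_left (n - i) k'.
transitivity (i * (k'.+1 * 'C(n-i,k'.+1)))%N; first ring.
rewrite h; ring.
Qed.
Lemma Eq2 n i k'' : ('C(i,1) * 'C(n - i, k''.+2 - 1) * ((i - 1) * k''.+1) = 2 * ('C(i,2) * 'C(n - i, k''.+2 - 2)) * (n - i - k''))%N.
Proof.
rewrite bin1 subn1 /= subn2 /=.
have h := mul_bin_left (n - i) k''.
have h2 := mul_bin_left i 1. rewrite bin1 in h2.
transitivity ((i - 1) * i * (k''.+1 * 'C(n-i,k''.+1)))%N; first ring.
rewrite h -h2; ring.
Qed.

Lemma arith1 n i k' a0 a1 B : (1 <= i)%N -> (i <= n)%N -> (8 * k'.+1 <= n)%N ->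
  (a0 * (i * k'.+1) = a1 * (n - i - k'))%N -> (a1 <= B)%N ->
  (k'.+1 * (a0 + B) <= n * B)%N.
Proof.
move=> i1 iln H8 E L.
have s1 : (k'.+1 * a0 <= a0 * (i * k'.+1))%N.
  rewrite mulnC leq_mul2l; apply/orP; right; exact: leq_pmull.
have s2 : (a1 * (n - i - k') <= B * (n - k'.+1))%N.
  apply: leq_mul => //. lia.
have s3 : (B * (n - k'.+1) + k'.+1 * B = n * B)%N.
  rewrite [(_.+1 * B)%N]mulnC -mulnDr subnK; first by rewrite mulnC.
  move: H8; clear; lia.
rewrite mulnDr -s3 leq_add2r. rewrite E in s1. exact: leq_trans s1 s2.
Qed.

Lemma arith2 n i k'' a0 a1 a2 B : (1 <= i)%N -> (i <= n)%N -> (i * 2 < n)%N ->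
  (8 * k''.+2 <= n)%N -> (n < i * k''.+2)%N ->
  (a0 * (i * k''.+2) = a1 * (n - i - k''.+1))%N ->
  (a1 * ((i - 1) * k''.+1) = 2 * a2 * (n - i - k''))%N ->
  (a2 <= B)%N ->
  (k''.+2 * (a0 + a1 + B) <= n * B)%N.
Proof.
move=> i1 iln H6 H8 hik E E2 L.
have n0 : (0 < n)%N by lia.
have s1 : (a0 <= a1)%N.
  rewrite -(leq_pmul2r n0).
  apply: (leq_trans (n := (a0 * (i * k''.+2))%N)); first by rewrite leq_mul2l ltnW ?orbT.
  rewrite E leq_mul2l; apply/orP; right. lia.
have s2 : (n - i - k'' <= (i - 1) * k''.+1)%N.
  have -> : ((i - 1) * k''.+1 = i * k''.+2 - i - k''.+1)%N.
    rewrite mulnBl mul1n mulnS. lia.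
  lia.
have D0 : (0 < n - i - k'')%N by lia.
have s3 : (a1 <= 2 * B)%N.
  rewrite -(leq_pmul2r D0).
  apply: (leq_trans (n := (a1 * ((i - 1) * k''.+1))%N)); first by rewrite leq_mul2l s2 orbT.
  by rewrite E2 leq_mul2r leq_mul2l L !orbT.
have s4 : (k''.+2 * (a0 + a1) <= B * (n - k''.+2))%N.
  apply: (leq_trans (n := (k''.+2 * (4 * B))%N)).
    rewrite leq_mul2l; apply/orP; right. lia.
  rewrite mulnA mulnC leq_mul2l; apply/orP; right. lia.
have s5 : (B * (n - k''.+2) + k''.+2 * B = n * B)%N.
  rewrite [(_.+1 * B)%N]mulnC -mulnDr subnK; first by rewrite mulnC.
  move: H8; clear; lia.
by rewrite mulnDr -s5 leq_add2r.
Qed.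

Lemma case1 n i k' : (1 <= i)%N -> (i <= n)%N -> (i * 2 < n)%N -> (8 * k'.+1 <= n)%N ->
  (k'.+1 * 'C(n, k'.+1) <=
   n * \sum_(j < k'.+2 | (1 <= j)%N) ('C(i, j) * 'C(n - i, k'.+1 - j)))%N.
Proof.
move=> i1 iln H6 H8.
pose a j := ('C(i, j) * 'C(n - i, k'.+1 - j))%N.
have HN : 'C(n, k'.+1) = (\sum_(j < k'.+2) a j)%N
  by rewrite /a binomial.Vandermonde subnKC.
have E : (a 0%N * (i * k'.+1) = a 1%N * (n - i - k'))%N.
  exact: Eq1.
have L := @lowb a k'.+1 1 isT.
rewrite HN split1.
by move: (@arith1 _ _ _ _ _ _ i1 iln H8 E L); rewrite /a.
Qed.

Lemma case2 n i k'' : (1 <= i)%N -> (i <= n)%N -> (i * 2 < n)%N ->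
  (8 * k''.+2 <= n)%N -> (n < i * k''.+2)%N ->
  (k''.+2 * 'C(n, k''.+2) <=
   n * \sum_(j < k''.+3 | (2 <= j)%N) ('C(i, j) * 'C(n - i, k''.+2 - j)))%N.
Proof.
move=> i1 iln H6 H8 hik.
pose a j := ('C(i, j) * 'C(n - i, k''.+2 - j))%N.
have HN : 'C(n, k''.+2) = (\sum_(j < k''.+3) a j)%N
  by rewrite /a binomial.Vandermonde subnKC.
have E : (a 0%N * (i * k''.+2) = a 1%N * (n - i - k''.+1))%N.
  exact: Eq1.
have E2 : (a 1%N * ((i - 1) * k''.+1) = 2 * a 2%N * (n - i - k''))%N.
  exact: Eq2.
have L := @lowb a k''.+2 2 isT.
rewrite HN split2.
by move: (@arith2 _ _ _ _ _ _ _ i1 iln H6 H8 hik E E2 L); rewrite /a.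
Qed.

Lemma fin (R : realFieldType) (n k i m : nat) : (0 < n)%N -> (0 < 'C(n, k))%N ->
  i%:R * k%:R / n%:R <= m%:R :> R ->
    (k * 'C(n, k) <= n * \sum_(j < k.+1 | (m <= j)%N) ('C(i, j) * 'C(n - i, k - j)))%N ->
  hyp_tail_ge n i k (i%:R * k%:R / n%:R : R) >= k%:R / n%:R.
Proof.
move=> n0 N0 hm hk.
have n0R : 0 < n%:R :> R by rewrite ltr0n.
rewrite /hyp_tail_ge.
apply: (le_trans (y := \sum_(j < k.+1 | (m <= j)%N) hyp_pmf n i k j)).
  rewrite /hyp_pmf -mulr_suml.
rewrite -natr_sum.
  set S := (\sum_(_ < _ | _) _)%N in hk *.
  have N0R : 0 < 'C(n, k)%:R :> R by rewrite ltr0n.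
  rewrite ler_pdivlMr // mulrAC ler_pdivrMr // -!natrM ler_nat.
  by rewrite [(S * n)%N]mulnC.
rewrite [X in X <= _]big_mkcond [X in _ <= X]big_mkcond /=.
apply: ler_sum => j _.
case: ifP => hj.
  rewrite ifT //; apply: (le_trans hm); by rewrite ler_nat.
case: ifP => _ //.
by rewrite /hyp_pmf divr_ge0 // ler0n.
Qed.

Theorem lemma9 (R : realFieldType) (n k i : nat) :
  (0 < n)%N -> (0 < k)%N -> (1 <= i <= n)%N ->
  k%:R * (i%:R / n%:R) * ((n - i)%:R / n%:R) < 1 :> R ->
  (8 * k <= n)%N ->
  i%:R < n%:R / 2 :> R ->
  hyp_tail_ge n i k (i%:R * k%:R / n%:R : R) >= k%:R / n%:R.
Proof.
move=> n0 k0 /andP[i1 iln] H4 H8 H6.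
have n0R : 0 < n%:R :> R by rewrite ltr0n.
have H4' : (k * i * (n - i) < n * n)%N.
  have : (k * i * (n - i))%:R / (n * n)%:R < 1 :> R.
    move: H4; congr (_ < _); rewrite !natrM natrB //; field.
    by rewrite pnatr_eq0 -lt0n.
  by rewrite ltr_pdivrMr ?ltr0n ?muln_gt0 ?n0 // mul1r ltr_nat.
have H6' : (i * 2 < n)%N.
  by move: H6; rewrite ltr_pdivlMr // -natrM ltr_nat.
have ik2 : (i * k < 2 * n)%N.
  rewrite -(ltn_pmul2l n0).
  apply: (leq_ltn_trans (n := (2 * (n - i) * (i * k))%N)).
    by rewrite leq_mul2r; apply/orP; right; lia.
  have -> : (2 * (n - i) * (i * k) = 2 * (k * i * (n - i)))%N by ring.
  by rewrite [X in (_ < X)%N]mulnCA ltn_pmul2l.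
have N0 : (0 < 'C(n, k))%N by rewrite bin_gt0; lia.
have key : exists m, [/\ (m <= k)%N, i%:R * k%:R / n%:R <= m%:R :> R &
    (k * 'C(n, k) <= n * \sum_(j < k.+1 | (m <= j)%N) ('C(i, j) * 'C(n - i, k - j)))%N].
  case: (leqP (i * k) n) => hik.
  - exists 1%N; split => //.
      by rewrite ler_pdivrMr // mul1r -natrM ler_nat.
    case: k k0 hik H4' H8 ik2 {H4 N0} => // k' _ hik H4' H8 ik2.
    exact: case1.
  - exists 2%N.
    have k2 : (2 <= k)%N.
      move: hik; case: (k) => [|[|kk]] //; rewrite ?muln0 ?muln1; lia.
    split => //.
      rewrite ler_pdivrMr // -natrM -natrM ler_nat. lia.
    case: k k0 k2 hik H4' H8 ik2 {H4 N0} => [|[|k'']] // _ _ hik H4' H8 ik2.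
    exact: case2.
case: key => m [mk hm hk].
exact: fin hm hk.
Qed.
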